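(* Let $p_0<0$, $\alpha\in(0,1)$, $\mathbb{S}:=\mathbb{R}/(2\pi\mathbb{Z})$, $\Omega:=\mathbb{S}\times(p_0,0)$. Let $C_1>1$ be a constant, independent of $L$, with the following property: for every integer $N\ge3$, every $L\ge1$ and all functions $u_1,u_2,u_3$ on $\overline\Omega$ with $\partial_q^nu_i\in C^\alpha(\overline\Omega)$ for $0\le n\le N$ and $\|\partial_q^n u_i\|_\alpha\le L^{n-1}(n-2)!$ for $2\le n\le N$, one has $\|\partial_q^n(u_1u_2u_3)\|_\alpha\le C_1\big(1+\sum_{i=1}^3\sum_{l=0}^1\|\partial_q^l u_i\|_\alpha\big)^6L^{n-1}(n-2)!$ for all $2\le n\le N$. Let $N\ge3$ and let $u$ be a function on $\overline\Omega$ with $\partial_q^n u\in C^\alpha(\overline\Omega)$ for all $0\le n\le N$ and $\inf_\Omega u>0$. If there exists a constant \[ L\ge \|\partial_q^2(1/u)\|_\alpha^2+C_1^2\Big(1+\sum_{l=0}^1\big(2\|\partial_q^l(1/u)\|_\alpha+\|\partial_q^{1+l}u\|_\alpha\big)\Big)^{12} \] such that $\|\partial_q^n u\|_\alpha\le L^{n-2}(n-3)!$ for all $3\le n\le N$, then \[ \|\partial_q^n(1/u)\|_\alpha\le L^{n-3/2}(n-2)!\qquad\text{for all } 2\le n\le N. \]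
   Context: $\|\cdot\|_\alpha$ denotes the norm of the Hölder space $C^\alpha(\overline\Omega)$, normalized so that $\|uv\|_\alpha\le\|u\|_\alpha\|v\|_\alpha$. $\partial_q$ denotes differentiation with respect to the first variable $q\in\mathbb{S}$. (Such a constant $C_1$ exists; in the paper it is the constant of the preceding product-estimate lemma.) *)

(* Defs.v *)
From Stdlib Require Import Reals Arith Factorial.
From Coquelicot Require Import Coquelicot.
Open Scope R_scope.

(* Functions on closure(Omega) = S x [p0,0], S = R/(2 pi Z), are represented as
   f : R -> R -> R (f q p), 2pi-periodic in q; only p in [p0,0] matters. *)
Definition in_strip (p0 p : R) : Prop := p0 <= p <= 0.

Definition qperiodic (p0 : R) (f : R -> R -> R) : Prop :=
  forall q p, in_strip p0 p -> f (q + 2 * PI) p = f q p.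

Definition dq (n : nat) (f : R -> R -> R) : R -> R -> R :=
  fun q p => Derive_n (fun t => f t p) n q.

Definition dist2 (q p q' p' : R) : R := sqrt ((q - q') ^ 2 + (p - p') ^ 2).

Definition in_holder (alpha p0 : R) (f : R -> R -> R) : Prop :=
  exists M : R,
    (forall q p, in_strip p0 p -> Rabs (f q p) <= M) /\
    (forall q p q' p', in_strip p0 p -> in_strip p0 p' -> (q, p) <> (q', p') ->
        Rabs (f q p - f q' p') <= M * Rpower (dist2 q p q' p') alpha).

Definition sup_norm (p0 : R) (f : R -> R -> R) : Rbar :=
  Lub_Rbar (fun r => exists q p, in_strip p0 p /\ r = Rabs (f q p)).

Definition holder_semi (alpha p0 : R) (f : R -> R -> R) : Rbar :=
  Lub_Rbar (fun r => exists q p q' p', in_strip p0 p /\ in_strip p0 p' /\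
      (q, p) <> (q', p') /\
      r = Rabs (f q p - f q' p') / Rpower (dist2 q p q' p') alpha).

(* ||f||_alpha = |f|_0 + [f]_alpha (submultiplicative) *)
Definition hnorm (alpha p0 : R) (f : R -> R -> R) : R :=
  real (Rbar_plus (sup_norm p0 f) (holder_semi alpha p0 f)).

Definition qCN_alpha (alpha p0 : R) (N : nat) (f : R -> R -> R) : Prop :=
  qperiodic p0 f /\
  (forall n, (n < N)%nat -> forall q p, in_strip p0 p ->
      ex_derive (fun t => dq n f t p) q) /\
  (forall n, (n <= N)%nat -> in_holder alpha p0 (dq n f)).

Definition inv_fun (f : R -> R -> R) : R -> R -> R := fun q p => / f q p.

Definition prod3 (f g h : R -> R -> R) : R -> R -> R :=
  fun q p => f q p * g q p * h q p.

(* Main.v *)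
Require Import Defs.
From Stdlib Require Import Reals Arith Factorial Lra Lia Psatz.
From Coquelicot Require Import Coquelicot.
Open Scope R_scope.

Definition fmul (f g : R -> R -> R) : R -> R -> R := fun q p => f q p * g q p.
Definition fadd (f g : R -> R -> R) : R -> R -> R := fun q p => f q p + g q p.
Definition fcst (k : R) : R -> R -> R := fun _ _ => k.

Lemma rpow_pos x a : 0 < Rpower x a.
Proof. unfold Rpower. apply exp_pos. Qed.

Lemma strip0 p0 : p0 <= 0 -> in_strip p0 0.
Proof. unfold in_strip; lra. Qed.

Lemma holder_M_nonneg (p0 : R) (f : R -> R -> R) M : p0 <= 0 ->
  (forall q p, in_strip p0 p -> Rabs (f q p) <= M) -> 0 <= M.
Proof. intros H0 H. specialize (H 0 0 (strip0 p0 H0)). pose proof (Rabs_pos (f 0 0)). lra. Qed.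

Lemma holder_ext alpha p0 f g : (forall q p, in_strip p0 p -> f q p = g q p) ->
  in_holder alpha p0 f -> in_holder alpha p0 g.
Proof.
  intros E [M [H1 H2]]. exists M; split.
  - intros q p Hp. rewrite <- E by auto. auto.
  - intros q p q' p' Hp Hp' D. rewrite <- !E by auto. auto.
Qed.

Lemma holder_cst alpha p0 k : in_holder alpha p0 (fcst k).
Proof.
  exists (Rabs k). split. intros; unfold fcst; lra.
  intros. unfold fcst. rewrite Rminus_diag, Rabs_R0.
  apply Rmult_le_pos. apply Rabs_pos. left; apply rpow_pos.
Qed.

Lemma holder_add alpha p0 f g : in_holder alpha p0 f -> in_holder alpha p0 g ->
  in_holder alpha p0 (fadd f g).
Proof.
  intros [M [H1 H2]] [K [K1 K2]]. exists (M + K). split.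
  - intros q p Hp. unfold fadd. eapply Rle_trans. apply Rabs_triang.
    specialize (H1 q p Hp); specialize (K1 q p Hp); lra.
  - intros q p q' p' Hp Hp' D. unfold fadd.
    replace (f q p + g q p - (f q' p' + g q' p')) with ((f q p - f q' p') + (g q p - g q' p')) by ring.
    eapply Rle_trans. apply Rabs_triang.
    specialize (H2 _ _ _ _ Hp Hp' D); specialize (K2 _ _ _ _ Hp Hp' D); lra.
Qed.

Lemma holder_mul alpha p0 f g : p0 <= 0 -> in_holder alpha p0 f -> in_holder alpha p0 g ->
  in_holder alpha p0 (fmul f g).
Proof.
  intros H0 [M [H1 H2]] [K [K1 K2]].
  pose proof (holder_M_nonneg p0 f M H0 H1) as HM.
  pose proof (holder_M_nonneg p0 g K H0 K1) as HK.
  exists (2 * M * K + M * K). split.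
  - intros q p Hp. unfold fmul. rewrite Rabs_mult.
    assert (Rabs (f q p) * Rabs (g q p) <= M * K).
    { apply Rmult_le_compat; try apply Rabs_pos; auto. }
    pose proof (Rmult_le_pos _ _ HM HK). lra.
  - intros q p q' p' Hp Hp' D. unfold fmul.
    replace (f q p * g q p - f q' p' * g q' p') with
      (f q p * (g q p - g q' p') + g q' p' * (f q p - f q' p')) by ring.
    eapply Rle_trans. apply Rabs_triang. rewrite !Rabs_mult.
    set (r := Rpower (dist2 q p q' p') alpha).
    assert (0 < r) by apply rpow_pos.
    assert (Rabs (f q p) * Rabs (g q p - g q' p') <= M * (K * r)).
    { apply Rmult_le_compat; try apply Rabs_pos; auto. }
    assert (Rabs (g q' p') * Rabs (f q p - f q' p') <= K * (M * r)).
    { apply Rmult_le_compat; try apply Rabs_pos; auto. }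
    assert (0 <= M * K * r) by (apply Rmult_le_pos; [apply Rmult_le_pos|]; lra).
    nra.
Qed.

Lemma holder_inv alpha p0 f c : 0 < c -> (forall q p, in_strip p0 p -> c <= f q p) ->
  in_holder alpha p0 f -> in_holder alpha p0 (inv_fun f).
Proof.
  intros Hc Hf [M [H1 H2]].
  exists (Rmax (/ c) (M / (c * c))). split.
  - intros q p Hp. unfold inv_fun. specialize (Hf q p Hp).
    rewrite Rabs_inv, Rabs_pos_eq by lra. eapply Rle_trans; [|apply Rmax_l].
    apply Rinv_le_contravar; lra.
  - intros q p q' p' Hp Hp' D. unfold inv_fun.
    pose proof (Hf q p Hp) as A. pose proof (Hf q' p' Hp') as B.
    replace (/ f q p - / f q' p') with ((f q' p' - f q p) / (f q p * f q' p')) by (field; lra).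
    unfold Rdiv. rewrite Rabs_mult, Rabs_inv, (Rabs_pos_eq (f q p * f q' p')) by nra.
    rewrite <- Rabs_Ropp, Ropp_minus_distr.
    set (r := Rpower (dist2 q p q' p') alpha).
    assert (0 < r) by apply rpow_pos.
    specialize (H2 _ _ _ _ Hp Hp' D). fold r in H2.
    assert (/ (f q p * f q' p') <= / (c * c)) by (apply Rinv_le_contravar; nra).
    assert (0 <= / (f q p * f q' p')) by (left; apply Rinv_0_lt_compat; nra).
    assert (Rabs (f q p - f q' p') * / (f q p * f q' p') <= M * r * / (c * c)).
    { apply Rmult_le_compat; auto using Rabs_pos. }
    assert (M / (c*c) <= Rmax (/ c) (M / (c * c))) by apply Rmax_r.
    unfold Rdiv in *. nra.
Qed.

Lemma dq_ext p0 f g : (forall q p, in_strip p0 p -> f q p = g q p) ->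
  forall n q p, in_strip p0 p -> dq n f q p = dq n g q p.
Proof. intros E n q p Hp. unfold dq. apply Derive_n_ext. intros; auto. Qed.

Lemma qCN_ext alpha p0 N f g : (forall q p, in_strip p0 p -> f q p = g q p) ->
  qCN_alpha alpha p0 N f -> qCN_alpha alpha p0 N g.
Proof.
  intros E [P [D H]]. split; [|split].
  - intros q p Hp. rewrite <- !E by auto. auto.
  - intros n Hn q p Hp. eapply ex_derive_ext; [|apply (D n Hn q p Hp)].
    intros t. apply (dq_ext p0 f g E n t p Hp).
  - intros n Hn. eapply holder_ext; [|apply (H n Hn)].
    intros q p Hp. apply (dq_ext p0 f g E n q p Hp).
Qed.

Lemma dq_comp n f q p : dq n (dq 1 f) q p = dq (S n) f q p.
Proof.
  unfold dq. replace (S n) with (n+1)%nat by lia. exact (Derive_n_comp (fun t => f t p) n 1 q).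
Qed.

Lemma qCN_mono alpha p0 N f : qCN_alpha alpha p0 (S N) f -> qCN_alpha alpha p0 N f.
Proof.
  intros [P [D H]]. split; [auto|split].
  - intros n Hn. apply D; lia.
  - intros n Hn. apply H; lia.
Qed.

Lemma qCN_mono_le alpha p0 N M f : (N <= M)%nat -> qCN_alpha alpha p0 M f -> qCN_alpha alpha p0 N f.
Proof.
  induction 1; auto. intros; apply IHle. apply qCN_mono; auto.
Qed.

Lemma deriv_periodic (g : R -> R) a q : (forall t, g (t + a) = g t) ->
  Derive g (q + a) = Derive g q.
Proof.
  intros E. unfold Derive. f_equal. apply Lim_ext. intros h.
  replace (q + a + h) with ((q + h) + a) by ring. rewrite !E. reflexivity.
Qed.

Lemma qCN_succ_inv alpha p0 N f : qCN_alpha alpha p0 (S N) f ->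
  in_holder alpha p0 f /\
  (forall q p, in_strip p0 p -> ex_derive (fun t => f t p) q) /\
  qCN_alpha alpha p0 N (dq 1 f).
Proof.
  intros [P [D H]]. split; [|split].
  - apply (H 0%nat); lia.
  - intros q p Hp. apply (D 0%nat ltac:(lia) q p Hp).
  - split; [|split].
    + intros q p Hp. unfold dq. simpl. apply deriv_periodic.
      intros t. apply P; auto.
    + intros n Hn q p Hp. eapply ex_derive_ext; [|apply (D (S n) ltac:(lia) q p Hp)].
      intros t. simpl. rewrite <- dq_comp. reflexivity.
    + intros n Hn. eapply holder_ext; [|apply (H (S n) ltac:(lia))].
      intros q p Hp. rewrite <- dq_comp. reflexivity.
Qed.

Lemma qCN_succ_intro alpha p0 N f : qperiodic p0 f ->
  in_holder alpha p0 f ->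
  (forall q p, in_strip p0 p -> ex_derive (fun t => f t p) q) ->
  qCN_alpha alpha p0 N (dq 1 f) -> qCN_alpha alpha p0 (S N) f.
Proof.
  intros P H0 D0 [P1 [D1 H1]]. split; [auto|split].
  - intros [|n] Hn q p Hp. apply D0; auto.
    eapply ex_derive_ext; [|apply (D1 n ltac:(lia) q p Hp)].
    intros t. apply dq_comp.
  - intros [|n] Hn. eapply holder_ext; [|apply H0]. intros; reflexivity.
    eapply holder_ext; [|apply (H1 n ltac:(lia))]. intros; apply dq_comp.
Qed.

Lemma qCN_0 alpha p0 f : qperiodic p0 f -> in_holder alpha p0 f -> qCN_alpha alpha p0 0 f.
Proof.
  intros P H. split; [auto|split]. intros; lia.
  intros n Hn. replace n with 0%nat by lia. eapply holder_ext; [|apply H]. intros; reflexivity.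
Qed.

Lemma qCN_holder alpha p0 N f : qCN_alpha alpha p0 N f -> in_holder alpha p0 f.
Proof.
  intros [_ [_ H]]. eapply holder_ext; [|apply (H 0%nat ltac:(lia))]. intros; reflexivity.
Qed.

Lemma qCN_periodic alpha p0 N f : qCN_alpha alpha p0 N f -> qperiodic p0 f.
Proof. intros [P _]; exact P. Qed.

Lemma qCN_cst alpha p0 N k : qCN_alpha alpha p0 N (fcst k).
Proof.
  revert k; induction N; intros k.
  - apply qCN_0. intros q p _; reflexivity. apply holder_cst.
  - apply qCN_succ_intro. intros q p _; reflexivity. apply holder_cst.
    intros q p _. unfold fcst. apply ex_derive_const.
    eapply qCN_ext; [|apply (IHN 0)]. intros q p _. unfold dq, fcst. simpl.
    rewrite Derive_const. reflexivity.
Qed.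

Lemma qCN_add alpha p0 N f g : qCN_alpha alpha p0 N f -> qCN_alpha alpha p0 N g ->
  qCN_alpha alpha p0 N (fadd f g).
Proof.
  revert f g; induction N; intros f g Hf Hg.
  - apply qCN_0. intros q p Hp; unfold fadd; rewrite (qCN_periodic _ _ _ _ Hf), (qCN_periodic _ _ _ _ Hg); auto.
    apply holder_add; eapply qCN_holder; eauto.
  - destruct (qCN_succ_inv _ _ _ _ Hf) as [Hf0 [Df Hf1]].
    destruct (qCN_succ_inv _ _ _ _ Hg) as [Hg0 [Dg Hg1]].
    apply qCN_succ_intro.
    + intros q p Hp; unfold fadd; rewrite (qCN_periodic _ _ _ _ Hf), (qCN_periodic _ _ _ _ Hg); auto.
    + apply holder_add; auto.
    + intros q p Hp. unfold fadd. apply (ex_derive_plus (fun t => f t p) (fun t => g t p)); auto.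
    + eapply qCN_ext; [|apply (IHN _ _ Hf1 Hg1)].
      intros q p Hp. unfold dq, fadd. simpl.
      rewrite (Derive_plus (fun t => f t p) (fun t => g t p)); auto.
Qed.

Lemma qCN_mul alpha p0 N f g : p0 <= 0 -> qCN_alpha alpha p0 N f -> qCN_alpha alpha p0 N g ->
  qCN_alpha alpha p0 N (fmul f g).
Proof.
  intros H0. revert f g; induction N; intros f g Hf Hg.
  - apply qCN_0. intros q p Hp; unfold fmul; rewrite (qCN_periodic _ _ _ _ Hf), (qCN_periodic _ _ _ _ Hg); auto.
    apply holder_mul; auto; eapply qCN_holder; eauto.
  - destruct (qCN_succ_inv _ _ _ _ Hf) as [Hf0 [Df Hf1]].
    destruct (qCN_succ_inv _ _ _ _ Hg) as [Hg0 [Dg Hg1]].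
    apply qCN_succ_intro.
    + intros q p Hp; unfold fmul; rewrite (qCN_periodic _ _ _ _ Hf), (qCN_periodic _ _ _ _ Hg); auto.
    + apply holder_mul; auto.
    + intros q p Hp. unfold fmul. apply (ex_derive_mult (fun t => f t p) (fun t => g t p)); auto.
    + eapply qCN_ext; [|apply (qCN_add _ _ _ _ _ (IHN _ _ Hf1 (qCN_mono _ _ _ _ Hg)) (IHN _ _ (qCN_mono _ _ _ _ Hf) Hg1))].
      intros q p Hp. unfold dq, fadd, fmul. simpl.
      rewrite (Derive_mult (fun t => f t p) (fun t => g t p)); auto.
Qed.

Lemma qCN_inv alpha p0 N f c : p0 <= 0 -> 0 < c -> (forall q p, in_strip p0 p -> c <= f q p) ->
  qCN_alpha alpha p0 N f -> qCN_alpha alpha p0 N (inv_fun f).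
Proof.
  intros H0 Hc Hpos. revert f Hpos; induction N; intros f Hpos Hf.
  - apply qCN_0. intros q p Hp; unfold inv_fun; rewrite (qCN_periodic _ _ _ _ Hf); auto.
    eapply holder_inv; eauto. eapply qCN_holder; eauto.
  - destruct (qCN_succ_inv _ _ _ _ Hf) as [Hf0 [Df Hf1]].
    apply qCN_succ_intro.
    + intros q p Hp; unfold inv_fun; rewrite (qCN_periodic _ _ _ _ Hf); auto.
    + eapply holder_inv; eauto.
    + intros q p Hp. unfold inv_fun. apply (ex_derive_inv (fun t => f t p)); auto.
      specialize (Hpos q p Hp); lra.
    + assert (HI := IHN f Hpos (qCN_mono _ _ _ _ Hf)).
      eapply qCN_ext; [|apply (qCN_mul _ _ _ _ _ H0 (qCN_mul _ _ _ _ _ H0 (qCN_cst _ _ _ (-1)) Hf1) (qCN_mul _ _ _ _ _ H0 HI HI))].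
      intros q p Hp. unfold dq, fmul, fcst, inv_fun. simpl.
      assert (f q p <> 0) by (specialize (Hpos q p Hp); lra).
      rewrite (Derive_inv (fun t => f t p)); auto. field. auto.
Qed.

Lemma lub_fin (E : R -> Prop) A x0 : E x0 -> 0 <= x0 -> (forall x, E x -> x <= A) ->
  exists s, Lub_Rbar E = Finite s /\ 0 <= s /\ s <= A /\ forall x, E x -> x <= s.
Proof.
  intros H0 Hx0 HA. destruct (Lub_Rbar_correct E) as [ub lst].
  destruct (Lub_Rbar E) as [s| |] eqn:Es.
  - exists s. split; auto. split; [|split].
    + specialize (ub x0 H0). simpl in ub. lra.
    + specialize (lst (Finite A)). simpl in lst. apply lst. intros x Hx. simpl. auto.
    + intros x Hx. specialize (ub x Hx). simpl in ub. auto.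
  - specialize (lst (Finite A)). simpl in lst. exfalso. apply lst. intros x Hx. simpl. auto.
  - specialize (ub x0 H0). simpl in ub. contradiction.
Qed.

Lemma lub_ge0 (E : R -> Prop) x0 : E x0 -> 0 <= x0 -> Rbar_le 0 (Lub_Rbar E).
Proof.
  intros H0 Hx0. destruct (Lub_Rbar_correct E) as [ub lst].
  specialize (ub x0 H0). destruct (Lub_Rbar E); simpl in *; auto; lra.
Qed.

Definition supset p0 (f : R -> R -> R) := fun r => exists q p, in_strip p0 p /\ r = Rabs (f q p).
Definition holset alpha p0 (f : R -> R -> R) := fun r => exists q p q' p', in_strip p0 p /\ in_strip p0 p' /\
      (q, p) <> (q', p') /\
      r = Rabs (f q p - f q' p') / Rpower (dist2 q p q' p') alpha.

Lemma supset_0 p0 f : p0 <= 0 -> supset p0 f (Rabs (f 0 0)).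
Proof. intros H. exists 0, 0. split; auto. apply strip0; auto. Qed.

Lemma neq01 : ((0, 0) : R * R) <> (1, 0).
Proof. intros E. injection E. lra. Qed.

Lemma holset_0 alpha p0 f : p0 <= 0 ->
  holset alpha p0 f (Rabs (f 0 0 - f 1 0) / Rpower (dist2 0 0 1 0) alpha).
Proof. intros H. exists 0, 0, 1, 0. split; [apply strip0; auto|split; [apply strip0; auto|split]]. apply neq01. reflexivity. Qed.

Lemma holval_ge0 alpha x y : 0 <= Rabs x / Rpower y alpha.
Proof. unfold Rdiv. apply Rmult_le_pos. apply Rabs_pos. left; apply Rinv_0_lt_compat, rpow_pos. Qed.

Lemma hnorm_ge0 alpha p0 f : p0 <= 0 -> 0 <= hnorm alpha p0 f.
Proof.
  intros H. unfold hnorm.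
  assert (A := lub_ge0 (supset p0 f) _ (supset_0 p0 f H) (Rabs_pos _)).
  assert (B := lub_ge0 (holset alpha p0 f) _ (holset_0 alpha p0 f H) (holval_ge0 _ _ _)).
  unfold sup_norm, holder_semi. fold (supset p0 f). fold (holset alpha p0 f).
  destruct (Lub_Rbar (supset p0 f)); destruct (Lub_Rbar (holset alpha p0 f)); simpl in *; lra.
Qed.

Lemma hnorm_ext alpha p0 f g : (forall q p, in_strip p0 p -> f q p = g q p) ->
  hnorm alpha p0 f = hnorm alpha p0 g.
Proof.
  intros E. unfold hnorm, sup_norm, holder_semi. f_equal. f_equal.
  - apply Lub_Rbar_eqset. intros x; split; intros [q [p [Hp Hx]]]; exists q, p; split; auto;
      rewrite Hx; [rewrite E|rewrite <- E]; auto.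
  - apply Lub_Rbar_eqset. intros x; split; intros [q [p [q' [p' [Hp [Hp' [D Hx]]]]]]];
      exists q, p, q', p'; do 3 (split; [auto|]); rewrite Hx; [rewrite !E|rewrite <- !E]; auto.
Qed.

Lemma hnorm_opp alpha p0 f : hnorm alpha p0 (fun q p => - f q p) = hnorm alpha p0 f.
Proof.
  unfold hnorm, sup_norm, holder_semi. f_equal. f_equal.
  - apply Lub_Rbar_eqset. intros x; split; intros [q [p [Hp Hx]]]; exists q, p; split; auto;
      rewrite Hx; rewrite ?Rabs_Ropp; auto.
  - apply Lub_Rbar_eqset. intros x; split; intros [q [p [q' [p' [Hp [Hp' [D Hx]]]]]]];
      exists q, p, q', p'; do 3 (split; [auto|]); rewrite Hx;
      [replace (- f q p - - f q' p') with (- (f q p - f q' p')) by ring|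
       replace (- f q p - - f q' p') with (- (f q p - f q' p')) by ring];
      rewrite ?Rabs_Ropp; auto.
Qed.

Lemma hnorm_le alpha p0 f A B : p0 <= 0 ->
  (forall q p, in_strip p0 p -> Rabs (f q p) <= A) ->
  (forall q p q' p', in_strip p0 p -> in_strip p0 p' -> (q, p) <> (q', p') ->
        Rabs (f q p - f q' p') <= B * Rpower (dist2 q p q' p') alpha) ->
  hnorm alpha p0 f <= A + B.
Proof.
  intros H0 HA HB.
  destruct (lub_fin (supset p0 f) A _ (supset_0 p0 f H0) (Rabs_pos _)) as [s [Es [s0 [sA _]]]].
  { intros x [q [p [Hp Hx]]]. subst; auto. }
  destruct (lub_fin (holset alpha p0 f) B _ (holset_0 alpha p0 f H0) (holval_ge0 _ _ _)) as [h [Eh [h0 [hB _]]]].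
  { intros x [q [p [q' [p' [Hp [Hp' [D Hx]]]]]]]. subst.
    pose proof (rpow_pos (dist2 q p q' p') alpha).
    apply Rle_div_l; auto. }
  unfold hnorm, sup_norm, holder_semi. fold (supset p0 f). fold (holset alpha p0 f).
  rewrite Es, Eh. simpl. lra.
Qed.

Lemma hnorm_spec alpha p0 f : p0 <= 0 -> in_holder alpha p0 f ->
  exists s h, hnorm alpha p0 f = s + h /\ 0 <= s /\ 0 <= h /\
   (forall q p, in_strip p0 p -> Rabs (f q p) <= s) /\
   (forall q p q' p', in_strip p0 p -> in_strip p0 p' -> (q, p) <> (q', p') ->
        Rabs (f q p - f q' p') <= h * Rpower (dist2 q p q' p') alpha).
Proof.
  intros H0 [M [HA HB]].
  destruct (lub_fin (supset p0 f) M _ (supset_0 p0 f H0) (Rabs_pos _)) as [s [Es [s0 [sA sU]]]].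
  { intros x [q [p [Hp Hx]]]. subst; auto. }
  destruct (lub_fin (holset alpha p0 f) M _ (holset_0 alpha p0 f H0) (holval_ge0 _ _ _)) as [h [Eh [h0 [hB hU]]]].
  { intros x [q [p [q' [p' [Hp [Hp' [D Hx]]]]]]]. subst.
    pose proof (rpow_pos (dist2 q p q' p') alpha).
    apply Rle_div_l; auto. }
  exists s, h. split; [|split; [|split; [|split]]]; auto.
  - unfold hnorm, sup_norm, holder_semi. fold (supset p0 f). fold (holset alpha p0 f).
    rewrite Es, Eh. reflexivity.
  - intros q p Hp. apply sU. exists q, p; auto.
  - intros q p q' p' Hp Hp' D.
    pose proof (rpow_pos (dist2 q p q' p') alpha).
    apply Rle_div_l; auto. apply hU. exists q, p, q', p'; auto.
Qed.

Lemma hnorm_add alpha p0 f g : p0 <= 0 -> in_holder alpha p0 f -> in_holder alpha p0 g ->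
  hnorm alpha p0 (fadd f g) <= hnorm alpha p0 f + hnorm alpha p0 g.
Proof.
  intros H0 Hf Hg.
  destruct (hnorm_spec _ _ _ H0 Hf) as [s1 [h1 [E1 [s10 [h10 [S1 H1]]]]]].
  destruct (hnorm_spec _ _ _ H0 Hg) as [s2 [h2 [E2 [s20 [h20 [S2 H2]]]]]].
  rewrite E1, E2. replace (s1 + h1 + (s2 + h2)) with ((s1 + s2) + (h1 + h2)) by ring.
  apply hnorm_le; auto.
  - intros q p Hp. unfold fadd. eapply Rle_trans. apply Rabs_triang.
    specialize (S1 q p Hp); specialize (S2 q p Hp); lra.
  - intros q p q' p' Hp Hp' D. unfold fadd.
    replace (f q p + g q p - (f q' p' + g q' p')) with ((f q p - f q' p') + (g q p - g q' p')) by ring.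
    eapply Rle_trans. apply Rabs_triang.
    specialize (H1 _ _ _ _ Hp Hp' D); specialize (H2 _ _ _ _ Hp Hp' D); lra.
Qed.

Lemma hnorm_mul alpha p0 f g : p0 <= 0 -> in_holder alpha p0 f -> in_holder alpha p0 g ->
  hnorm alpha p0 (fmul f g) <= hnorm alpha p0 f * hnorm alpha p0 g.
Proof.
  intros H0 Hf Hg.
  destruct (hnorm_spec _ _ _ H0 Hf) as [s1 [h1 [E1 [s10 [h10 [S1 H1]]]]]].
  destruct (hnorm_spec _ _ _ H0 Hg) as [s2 [h2 [E2 [s20 [h20 [S2 H2]]]]]].
  rewrite E1, E2. apply Rle_trans with (s1 * s2 + (s1 * h2 + s2 * h1)).
  2: { assert (0 <= h1 * h2) by (apply Rmult_le_pos; auto). nra. }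
  apply hnorm_le; auto.
  - intros q p Hp. unfold fmul. rewrite Rabs_mult.
    apply Rmult_le_compat; auto using Rabs_pos.
  - intros q p q' p' Hp Hp' D. unfold fmul.
    replace (f q p * g q p - f q' p' * g q' p') with
      (f q p * (g q p - g q' p') + g q' p' * (f q p - f q' p')) by ring.
    eapply Rle_trans. apply Rabs_triang. rewrite !Rabs_mult.
    set (r := Rpower (dist2 q p q' p') alpha).
    assert (0 < r) by apply rpow_pos.
    assert (Rabs (f q p) * Rabs (g q p - g q' p') <= s1 * (h2 * r)).
    { apply Rmult_le_compat; try apply Rabs_pos; auto. }
    assert (Rabs (g q' p') * Rabs (f q p - f q' p') <= s2 * (h1 * r)).
    { apply Rmult_le_compat; try apply Rabs_pos; auto. }
    nra.
Qed.

Lemma hnorm_cst_le alpha p0 k : p0 <= 0 -> hnorm alpha p0 (fcst k) <= Rabs k.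
Proof.
  intros H0. replace (Rabs k) with (Rabs k + 0) by ring. apply hnorm_le; auto.
  - intros; unfold fcst; lra.
  - intros. unfold fcst. rewrite Rminus_diag, Rabs_R0. lra.
Qed.

Lemma hnorm_scal alpha p0 k f : p0 <= 0 -> in_holder alpha p0 f ->
  hnorm alpha p0 (fmul (fcst k) f) <= Rabs k * hnorm alpha p0 f.
Proof.
  intros H0 Hf. eapply Rle_trans. apply hnorm_mul; auto. apply holder_cst.
  apply Rmult_le_compat_r. apply hnorm_ge0; auto. apply hnorm_cst_le; auto.
Qed.

Lemma small_pow alpha d : 0 < alpha -> 0 < d -> exists e, 0 < e /\ forall x, 0 < x <= e -> Rpower x alpha <= d.
Proof.
  intros Ha Hd. exists (Rpower d (/ alpha)). split. apply rpow_pos.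
  intros x Hx. eapply Rle_trans. apply Rle_Rpower_l. lra. exact Hx.
  rewrite Rpower_mult. rewrite Rinv_l by lra. rewrite Rpower_1; lra.
Qed.

Lemma boundary_pos alpha p0 f c : p0 < 0 -> 0 < alpha -> in_holder alpha p0 f ->
  (forall q p, p0 < p < 0 -> c <= f q p) -> forall q p, in_strip p0 p -> c <= f q p.
Proof.
  intros Hp0 Ha [M [HM1 HM2]] Hc q p Hp.
  destruct (Rle_dec c (f q p)) as [?|Hn]; auto. exfalso.
  set (d := c - f q p).
  assert (0 < d) by (unfold d; lra).
  assert (0 <= M) by (specialize (HM1 q p Hp); pose proof (Rabs_pos (f q p)); lra).
  destruct (small_pow alpha (d / (2 * (M + 1))) Ha) as [e [He HE]].
  { apply Rdiv_lt_0_compat; lra. }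
  set (eps := Rmin e (- p0 / 4)).
  assert (0 < eps) by (unfold eps; apply Rmin_glb_lt; lra).
  assert (eps <= e) by apply Rmin_l. assert (eps <= - p0 / 4) by apply Rmin_r.
  assert (exists p', p0 < p' < 0 /\ (p' - p) ^ 2 = eps ^ 2) as [p' [Hp' Hpp]].
  { unfold in_strip in Hp. destruct (Rle_dec p (p0 / 2)).
    - exists (p + eps). split. lra. ring.
    - exists (p - eps). split. lra. ring. }
  assert (Hs : in_strip p0 p') by (unfold in_strip in *; lra).
  assert (Hne : (q, p') <> (q, p)) by (intros E; injection E; intros; subst; nra).
  specialize (HM2 _ _ _ _ Hs Hp Hne).
  assert (Hdist : dist2 q p' q p = eps).
  { unfold dist2. replace ((q - q) ^ 2 + (p' - p) ^ 2) with (eps ^ 2) by (rewrite <- Hpp; ring).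
    apply sqrt_pow2. lra. }
  rewrite Hdist in HM2. specialize (HE eps ltac:(lra)).
  assert (M * Rpower eps alpha <= M * (d / (2 * (M + 1)))) by (apply Rmult_le_compat_l; auto).
  assert (M * (d / (2 * (M + 1))) < d).
  { unfold Rdiv. rewrite Rinv_mult.
    assert (M * / (M+1) < 1). { apply (Rmult_lt_reg_r (M+1)); [lra|]. rewrite Rmult_assoc, Rinv_l by lra. lra. }
    assert (0 < / (M+1)) by (apply Rinv_0_lt_compat; lra).
    assert (0 < / 2) by lra. nra. }
  assert (c <= f q p') by (apply Hc; lra).
  pose proof (Rle_abs (f q p' - f q p)). unfold d in *. lra.
Qed.

Lemma isd_mul (f g : R -> R) x a b : is_derive f x a -> is_derive g x b ->
  is_derive (fun t => f t * g t) x (a * g x + f x * b).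
Proof. intros. apply (is_derive_mult f g); auto. intros; apply Rmult_comm. Qed.

Lemma isd_add (f g : R -> R) x a b : is_derive f x a -> is_derive g x b ->
  is_derive (fun t => f t + g t) x (a + b).
Proof. intros. apply (is_derive_plus f g); auto. Qed.

Lemma isd_opp (f : R -> R) x a : is_derive f x a -> is_derive (fun t => - f t) x (- a).
Proof. intros. apply (is_derive_opp f); auto. Qed.

Lemma isd_cst (k x : R) : is_derive (fun _ => k) x 0.
Proof. apply (is_derive_const (K:=R_AbsRing) (V:=R_NormedModule)). Qed.

Lemma isd_eq (f : R -> R) x a b : is_derive f x a -> a = b -> is_derive f x b.
Proof. intros H E; subst; auto. Qed.

Lemma third (W U1 U2 U3 : R -> R) :
  (forall t, ex_derive W t) -> (forall t, ex_derive (Derive W) t) ->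
  (forall t, is_derive U1 t (U2 t)) -> (forall t, is_derive U2 t (U3 t)) ->
  (forall t, Derive W t = - (W t * W t * U1 t)) ->
  forall t, Derive (Derive (Derive W)) t =
    - (2 * (Derive W t * Derive W t + W t * Derive (Derive W) t) * U1 t
       + 4 * (W t * Derive W t) * U2 t + W t * W t * U3 t).
Proof.
  intros DW DW1 D1 D2 E.
  assert (IW : forall t, is_derive W t (Derive W t)) by (intros; apply Derive_correct; auto).
  assert (IW1 : forall t, is_derive (Derive W) t (Derive (Derive W) t)) by (intros; apply Derive_correct; auto).
  assert (E2 : forall t, Derive (Derive W) t = - (2 * W t * Derive W t * U1 t + W t * W t * U2 t)).
  { intros t. apply is_derive_unique.
    apply (is_derive_ext (fun t => - (W t * W t * U1 t))). intros; symmetry; apply E.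
    eapply isd_eq. apply isd_opp. apply isd_mul. apply isd_mul. apply IW. apply IW. apply D1.
    match goal with |- ?a = ?b => change (@eq R a b) end; cbv beta; ring. }
  intros t. apply is_derive_unique.
  apply (is_derive_ext (fun t => - (2 * W t * Derive W t * U1 t + W t * W t * U2 t))).
  intros; symmetry; apply E2.
  eapply isd_eq. apply isd_opp. apply isd_add. apply isd_mul. apply isd_mul. apply isd_mul.
  apply isd_cst. apply IW. apply IW1. apply D1. apply isd_mul. apply isd_mul. apply IW. apply IW. apply D2.
  match goal with |- ?a = ?b => change (@eq R a b) end; cbv beta; ring.
Qed.

Lemma dw1 p0 u c : 0 < c -> (forall q p, in_strip p0 p -> c <= u q p) ->
  (forall q p, in_strip p0 p -> ex_derive (fun t => u t p) q) ->
  forall q p, in_strip p0 p ->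
  dq 1 (inv_fun u) q p = - prod3 (inv_fun u) (inv_fun u) (dq 1 u) q p.
Proof.
  intros Hc Hpos Hd q p Hp. unfold dq, prod3, inv_fun. simpl.
  assert (u q p <> 0) by (specialize (Hpos q p Hp); lra).
  rewrite (Derive_inv (fun t => u t p)); auto. field; auto.
Qed.

Lemma dwn p0 u c : 0 < c -> (forall q p, in_strip p0 p -> c <= u q p) ->
  (forall q p, in_strip p0 p -> ex_derive (fun t => u t p) q) ->
  forall m q p, in_strip p0 p ->
  dq (S m) (inv_fun u) q p = - dq m (prod3 (inv_fun u) (inv_fun u) (dq 1 u)) q p.
Proof.
  intros Hc Hpos Hd m q p Hp. rewrite <- dq_comp.
  rewrite (dq_ext p0 _ (fun q p => - prod3 (inv_fun u) (inv_fun u) (dq 1 u) q p)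
     (dw1 p0 u c Hc Hpos Hd) m q p Hp).
  unfold dq. apply (Derive_n_opp (fun t => prod3 (inv_fun u) (inv_fun u) (dq 1 u) t p)).
Qed.

Lemma hm alpha p0 f g x y : p0 <= 0 -> in_holder alpha p0 f -> in_holder alpha p0 g ->
  hnorm alpha p0 f <= x -> hnorm alpha p0 g <= y -> hnorm alpha p0 (fmul f g) <= x * y.
Proof.
  intros H0 Hf Hg Hx Hy. eapply Rle_trans. apply hnorm_mul; auto.
  apply Rmult_le_compat; auto; apply hnorm_ge0; auto.
Qed.

Lemma ha alpha p0 f g x y : p0 <= 0 -> in_holder alpha p0 f -> in_holder alpha p0 g ->
  hnorm alpha p0 f <= x -> hnorm alpha p0 g <= y -> hnorm alpha p0 (fadd f g) <= x + y.
Proof.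
  intros H0 Hf Hg Hx Hy. eapply Rle_trans. apply hnorm_add; auto. lra.
Qed.

Lemma hc alpha p0 k : p0 <= 0 -> hnorm alpha p0 (fcst k) <= Rabs k.
Proof. apply hnorm_cst_le. Qed.

Lemma poly6 S : 0 <= S -> 3 * S ^ 2 + 6 * S ^ 3 <= (1 + S) ^ 6.
Proof.
  intros H. replace ((1 + S) ^ 6) with (1 + 6*S + 15*S^2 + 20*S^3 + 15*S^4 + 6*S^5 + S^6) by ring.
  assert (0 <= S^2) by (apply pow_le; auto). assert (0 <= S^3) by (apply pow_le; auto).
  assert (0 <= S^4) by (apply pow_le; auto). assert (0 <= S^5) by (apply pow_le; auto).
  assert (0 <= S^6) by (apply pow_le; auto). lra.
Qed.

Lemma rpow_split L n : 1 <= L -> (2 <= n)%nat ->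
  Rpower L (INR n - 3 / 2) = L ^ (n - 2) * sqrt L.
Proof.
  intros HL Hn. replace (INR n - 3/2) with (INR (n - 2) + / 2).
  rewrite Rpower_plus, Rpower_pow, Rpower_sqrt by lra. reflexivity.
  rewrite minus_INR by lia. simpl. lra.
Qed.

Ltac hol := match goal with
 | |- in_holder _ _ (fadd _ _) => apply holder_add; hol
 | |- in_holder _ _ (fmul _ _) => apply holder_mul; [lra|hol|hol]
 | |- in_holder _ _ (fcst _) => apply holder_cst
 | _ => eassumption end.

Ltac hb := first [ apply hc; lra | eassumption
  | (eapply ha; [lra | hol | hol | hb | hb]) | (eapply hm; [lra|hol|hol|hb|hb]) ].

Theorem lemma2p3 (p0 alpha C1 : R) (N : nat) (u : R -> R -> R) :
  p0 < 0 -> 0 < alpha < 1 -> 1 < C1 ->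
  (* the product estimate defining C1 *)
  (forall (N' : nat) (L : R) (u1 u2 u3 : R -> R -> R),
      (3 <= N')%nat -> 1 <= L ->
      qCN_alpha alpha p0 N' u1 -> qCN_alpha alpha p0 N' u2 -> qCN_alpha alpha p0 N' u3 ->
      (forall n, (2 <= n <= N')%nat ->
         hnorm alpha p0 (dq n u1) <= L ^ (n - 1) * INR (fact (n - 2)) /\
         hnorm alpha p0 (dq n u2) <= L ^ (n - 1) * INR (fact (n - 2)) /\
         hnorm alpha p0 (dq n u3) <= L ^ (n - 1) * INR (fact (n - 2))) ->
      forall n, (2 <= n <= N')%nat ->
        hnorm alpha p0 (dq n (prod3 u1 u2 u3)) <=
          C1 * (1 + (hnorm alpha p0 (dq 0 u1) + hnorm alpha p0 (dq 1 u1))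
                  + (hnorm alpha p0 (dq 0 u2) + hnorm alpha p0 (dq 1 u2))
                  + (hnorm alpha p0 (dq 0 u3) + hnorm alpha p0 (dq 1 u3))) ^ 6
             * L ^ (n - 1) * INR (fact (n - 2))) ->
  (3 <= N)%nat ->
  qCN_alpha alpha p0 N u ->
  (exists c, 0 < c /\ forall q p, p0 < p < 0 -> c <= u q p) ->
  forall L : R,
    L >= hnorm alpha p0 (dq 2 (inv_fun u)) ^ 2
         + C1 ^ 2 * (1 + ((2 * hnorm alpha p0 (dq 0 (inv_fun u)) + hnorm alpha p0 (dq 1 u))
                         + (2 * hnorm alpha p0 (dq 1 (inv_fun u)) + hnorm alpha p0 (dq 2 u)))) ^ 12 ->
    (forall n, (3 <= n <= N)%nat ->
       hnorm alpha p0 (dq n u) <= L ^ (n - 2) * INR (fact (n - 3))) ->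
    forall n, (2 <= n <= N)%nat ->
      hnorm alpha p0 (dq n (inv_fun u)) <= Rpower L (INR n - 3 / 2) * INR (fact (n - 2)).
Proof.
  intros Hp0 Ha HC1 Hprod HN Hu [c [Hc Hcu]] L HL Hun.
  assert (H0 : p0 <= 0) by lra.
  assert (Hpos : forall q p, in_strip p0 p -> c <= u q p)
    by exact (boundary_pos alpha p0 u c Hp0 (proj1 Ha) (qCN_holder _ _ _ _ Hu) Hcu).
  assert (Hw : qCN_alpha alpha p0 N (inv_fun u)) by (eapply qCN_inv; eauto).
  assert (Hud : forall q p, in_strip p0 p -> ex_derive (fun t => u t p) q)
    by (intros q p Hp; exact (proj1 (proj2 Hu) 0%nat ltac:(lia) q p Hp)).
  assert (HwH : forall k, (k <= N)%nat -> in_holder alpha p0 (dq k (inv_fun u)))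
    by (intros k Hk; exact (proj2 (proj2 Hw) k Hk)).
  assert (HuH : forall k, (k <= N)%nat -> in_holder alpha p0 (dq k u))
    by (intros k Hk; exact (proj2 (proj2 Hu) k Hk)).
  set (a := hnorm alpha p0 (dq 0 (inv_fun u))) in *.
  set (b := hnorm alpha p0 (dq 1 (inv_fun u))) in *.
  set (h := hnorm alpha p0 (dq 2 (inv_fun u))) in *.
  set (d := hnorm alpha p0 (dq 1 u)) in *.
  set (cc := hnorm alpha p0 (dq 2 u)) in *.
  assert (a0 : 0 <= a) by apply hnorm_ge0, H0.
  assert (b0 : 0 <= b) by apply hnorm_ge0, H0.
  assert (h0 : 0 <= h) by apply hnorm_ge0, H0.
  assert (d0 : 0 <= d) by apply hnorm_ge0, H0.
  assert (c0 : 0 <= cc) by apply hnorm_ge0, H0.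
  set (Sg := (2 * a + d) + (2 * b + cc)) in *.
  assert (HS : 0 <= Sg) by (unfold Sg; lra).
  assert (HK6 : 1 <= (1 + Sg) ^ 6) by (apply pow_R1_Rle; lra).
  set (K := C1 * (1 + Sg) ^ 6).
  assert (HKK : K * K = C1 ^ 2 * (1 + Sg) ^ 12) by (unfold K; ring).
  assert (HK0 : (1 + Sg) ^ 6 <= K) by (unfold K; nra).
  assert (HKL : K * K <= L) by (rewrite HKK; assert (0 <= h ^ 2) by (apply pow2_ge_0); lra).
  assert (HL1 : 1 <= L) by nra.
  set (s := sqrt L).
  assert (Hss : s * s = L) by (apply sqrt_sqrt; lra).
  assert (Hs1 : 1 <= s) by (unfold s; rewrite <- sqrt_1; apply sqrt_le_1_alt; lra).
  assert (HKs : K <= s) by (destruct (Rle_dec K s); auto; nra).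
  assert (Hhs : h <= s).
  { assert (h * h <= L) by (assert (0 <= C1 ^ 2 * (1 + Sg) ^ 12) by (rewrite <- HKK; nra); simpl in HL; lra).
    destruct (Rle_dec h s); auto; nra. }
  intros n Hn. rewrite rpow_split by (auto; lia). fold s.
  revert Hn. induction n as [n IH] using (well_founded_induction lt_wf). intros Hn.
  destruct n as [|[|[|[|n']]]]; try lia.
  - simpl. fold h. lra.
  -
    set (T := fadd (fadd (fmul (fmul (fcst 2) (fadd (fmul (dq 1 (inv_fun u)) (dq 1 (inv_fun u)))
                 (fmul (inv_fun u) (dq 2 (inv_fun u))))) (dq 1 u))
                 (fmul (fmul (fcst 4) (fmul (inv_fun u) (dq 1 (inv_fun u)))) (dq 2 u)))
                 (fmul (fmul (inv_fun u) (inv_fun u)) (dq 3 u))).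
    assert (E3 : forall q p, in_strip p0 p -> dq 3 (inv_fun u) q p = fmul (fcst (-1)) T q p).
    { intros q p Hp.
      change (dq 3 (inv_fun u) q p) with (Derive (Derive (Derive (fun t => inv_fun u t p))) q).
      rewrite (third (fun t => inv_fun u t p) (fun t => dq 1 u t p) (fun t => dq 2 u t p) (fun t => dq 3 u t p)).
      - unfold T, fmul, fadd, fcst. cbv beta. change (dq 1 (inv_fun u) q p) with (Derive (fun t => inv_fun u t p) q). change (dq 2 (inv_fun u) q p) with (Derive (Derive (fun t => inv_fun u t p)) q). ring.
      - intros t; exact (proj1 (proj2 Hw) 0%nat ltac:(lia) t p Hp).
      - intros t; exact (proj1 (proj2 Hw) 1%nat ltac:(lia) t p Hp).
      - intros t; apply Derive_correct; exact (proj1 (proj2 Hu) 1%nat ltac:(lia) t p Hp).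
      - intros t; apply Derive_correct; exact (proj1 (proj2 Hu) 2%nat ltac:(lia) t p Hp).
      - intros t. exact (dw1 p0 u c Hc Hpos Hud t p Hp). }
    rewrite (hnorm_ext _ _ _ _ E3).
    assert (Ra : hnorm alpha p0 (inv_fun u) <= a) by (unfold a; right; apply hnorm_ext; intros; reflexivity).
    assert (Rb : hnorm alpha p0 (dq 1 (inv_fun u)) <= b) by apply Rle_refl.
    assert (Rh : hnorm alpha p0 (dq 2 (inv_fun u)) <= h) by apply Rle_refl.
    assert (Rd : hnorm alpha p0 (dq 1 u) <= d) by apply Rle_refl.
    assert (Rc : hnorm alpha p0 (dq 2 u) <= cc) by apply Rle_refl.
    assert (Re : hnorm alpha p0 (dq 3 u) <= L) by (pose proof (Hun 3%nat ltac:(lia)) as X; simpl in X; lra).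
    assert (Hw0 : in_holder alpha p0 (inv_fun u)) by (eapply holder_ext; [|apply (HwH 0%nat ltac:(lia))]; intros; reflexivity).
    assert (Hw1 := HwH 1%nat ltac:(lia)). assert (Hw2 := HwH 2%nat ltac:(lia)).
    assert (Hu1 := HuH 1%nat ltac:(lia)). assert (Hu2 := HuH 2%nat ltac:(lia)). assert (Hu3 := HuH 3%nat ltac:(lia)).
    eapply Rle_trans. unfold T. hb.
    replace (Rabs (-1)) with 1 by (unfold Rabs; destruct Rcase_abs; lra). rewrite (Rabs_pos_eq 2), (Rabs_pos_eq 4) by lra. simpl.
    assert (aS : a <= Sg) by (unfold Sg; lra). assert (bS : b <= Sg) by (unfold Sg; lra).
    assert (dS : d <= Sg) by (unfold Sg; lra). assert (cS : cc <= Sg) by (unfold Sg; lra).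
    assert (mle : forall x y X Y, 0 <= x -> 0 <= y -> x <= X -> y <= Y -> x * y <= X * Y)
      by (intros; apply Rmult_le_compat; auto).
    assert (T1 : b * b * d <= Sg ^ 3).
    { replace (Sg ^ 3) with (Sg * Sg * Sg) by ring. apply mle; try apply mle; nra. }
    assert (T2 : a * h * d <= Sg ^ 2 * s).
    { replace (Sg ^ 2 * s) with (Sg * s * Sg) by ring. apply mle; try apply mle; nra. }
    assert (T3 : a * b * cc <= Sg ^ 3).
    { replace (Sg ^ 3) with (Sg * Sg * Sg) by ring. apply mle; try apply mle; nra. }
    assert (T4 : a * a * L <= Sg ^ 2 * (s * s)).
    { rewrite Hss. replace (Sg ^ 2 * L) with (Sg * Sg * L) by ring. apply mle; try apply mle; nra. }
    assert (P6 := poly6 Sg HS).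
    assert (0 <= Sg ^ 2) by (apply pow_le; lra). assert (0 <= Sg ^ 3) by (apply pow_le; lra).
    assert (Sg ^ 2 * s <= Sg ^ 2 * (s * s)) by (apply Rmult_le_compat_l; nra).
    assert (Sg ^ 3 <= Sg ^ 3 * (s * s)) by (rewrite <- (Rmult_1_r (Sg ^ 3)) at 1; apply Rmult_le_compat_l; nra).
    assert (Q : 2 * (b * b + a * h) * d + 4 * (a * b) * cc + a * a * L <= (3 * Sg ^ 2 + 6 * Sg ^ 3) * (s * s)).
    { replace (2 * (b * b + a * h) * d + 4 * (a * b) * cc + a * a * L) with
        (2 * (b * b * d) + 2 * (a * h * d) + 4 * (a * b * cc) + a * a * L) by ring. nra. }
    assert (0 <= s * s) by nra.
    assert (Q2 : (3 * Sg ^ 2 + 6 * Sg ^ 3) * (s * s) <= K * (s * s)) by (apply Rmult_le_compat_r; lra).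
    assert (Q3 : K * (s * s) <= s * (s * s)) by (apply Rmult_le_compat_r; lra).
    assert (L * 1 * s * 1 = s * (s * s)) by (rewrite <- Hss; ring). lra.
  - rewrite (hnorm_ext alpha p0 _ (fun q p => - dq (S (S (S n'))) (prod3 (inv_fun u) (inv_fun u) (dq 1 u)) q p)
      (dwn p0 u c Hc Hpos Hud (S (S (S n'))))).
    rewrite hnorm_opp.
    assert (Hbw : forall k, (2 <= k <= S (S (S n')))%nat ->
      hnorm alpha p0 (dq k (inv_fun u)) <= L ^ (k - 1) * INR (fact (k - 2))).
    { intros k Hk. eapply Rle_trans. apply IH; lia. apply Rmult_le_compat_r. apply pos_INR.
      replace (k - 1)%nat with (S (k - 2)) by lia. simpl. rewrite (Rmult_comm L).
      apply Rmult_le_compat_l. apply pow_le; lra. nra. }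
    assert (Hbu : forall k, (2 <= k <= S (S (S n')))%nat ->
      hnorm alpha p0 (dq k (dq 1 u)) <= L ^ (k - 1) * INR (fact (k - 2))).
    { intros k Hk. rewrite (hnorm_ext _ _ _ (dq (S k) u)) by (intros; apply dq_comp).
      pose proof (Hun (S k) ltac:(lia)) as X.
      replace (S k - 2)%nat with (k - 1)%nat in X by lia.
      replace (S k - 3)%nat with (k - 2)%nat in X by lia. exact X. }
    destruct N as [|N1]; [lia|].
    destruct (qCN_succ_inv _ _ _ _ Hu) as [_ [_ Hu1]].
    assert (HP := Hprod (S (S (S n'))) L (inv_fun u) (inv_fun u) (dq 1 u) ltac:(lia) HL1
      (qCN_mono_le alpha p0 (S (S (S n'))) (S N1) _ ltac:(lia) Hw)
      (qCN_mono_le alpha p0 (S (S (S n'))) (S N1) _ ltac:(lia) Hw)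
      (qCN_mono_le alpha p0 (S (S (S n'))) N1 _ ltac:(lia) Hu1)
      (fun k Hk => conj (Hbw k Hk) (conj (Hbw k Hk) (Hbu k Hk))) (S (S (S n'))) ltac:(lia)).
    change (hnorm alpha p0 (dq 0 (inv_fun u))) with a in HP.
    change (hnorm alpha p0 (dq 1 (inv_fun u))) with b in HP.
    replace (hnorm alpha p0 (dq 0 (dq 1 u))) with d in HP by (apply hnorm_ext; intros; reflexivity).
    replace (hnorm alpha p0 (dq 1 (dq 1 u))) with cc in HP by (apply hnorm_ext; intros; symmetry; apply dq_comp).
    replace (1 + (a + b) + (a + b) + (d + cc)) with (1 + Sg) in HP by (unfold Sg; ring).
    change (C1 * (1 + Sg) ^ 6) with K in HP.
    eapply Rle_trans; [exact HP|].
    replace (S (S (S n')) - 1)%nat with (S (S n')) by lia.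
    replace (S (S (S (S n'))) - 2)%nat with (S (S n')) by lia.
    replace (S (S (S n')) - 2)%nat with (S n') by lia.
    assert (0 <= L ^ S (S n')) by (apply pow_le; lra).
    assert (F : INR (fact (S n')) <= INR (fact (S (S n')))) by (apply le_INR, fact_le; lia).
    assert (0 <= INR (fact (S n'))) by apply pos_INR.
    assert (K * L ^ S (S n') <= L ^ S (S n') * s) by nra.
    apply Rmult_le_compat; try nra.
Qed.
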